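(* For all $n$, there is a bijection between $\mathbf{I}_n(120)$ and $S_n(\underline{143}2)$; in particular $|\mathbf{I}_n(120)|=|S_n(\underline{143}2)|$.
   Context: $S_n$ is the set of permutations of $[n]$, and $\mathbf{I}_n$ the set of integer sequences $e_1\dots e_n$ with $0\le e_i<i$. $\mathbf{I}_n(120)$ is the set of $e\in\mathbf{I}_n$ with no $i$ such that $e_{i+2}<e_i<e_{i+1}$. A permutation $\pi$ contains the vincular pattern $\underline{143}2$ if there exist $i$ and $j>i+2$ with $\pi_i<\pi_j<\pi_{i+2}<\pi_{i+1}$; $S_n(\underline{143}2)$ is the set of $\pi\in S_n$ that do not contain it. *)

(* Defs.v *)
From mathcomp Require Import all_boot all_fingroup.
Set Implicit Arguments. Unset Strict Implicit. Unset Printing Implicit Defensive.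

(* Indices are 0-based: the paper's e_1 ... e_n is e_0 ... e_(n-1) here, and
   the paper's condition 0 <= e_i < i becomes e_i <= i (0-based i). *)

Definition is_invseq (n : nat) (e : n.-tuple 'I_n) : bool :=
  [forall i : 'I_n, (tnth e i : nat) <= i].

Definition avoids120 (n : nat) (e : n.-tuple 'I_n) : bool :=
  let s := map val e in
  [forall i : 'I_n, (i.+2 < n) ==>
     ~~ ((nth 0 s i.+2 < nth 0 s i) && (nth 0 s i < nth 0 s i.+1))].

Definition Inv120 (n : nat) : {set n.-tuple 'I_n} :=
  [set e | is_invseq e && avoids120 e].

Definition perm_seq (n : nat) (p : 'S_n) : seq nat :=
  [seq val (p i) | i <- enum 'I_n].

Definition contains1432 (n : nat) (p : 'S_n) : bool :=
  let s := perm_seq p in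
  [exists i : 'I_n, exists j : 'I_n,
     [&& i.+2 < j,
         nth 0 s i < nth 0 s j,
         nth 0 s j < nth 0 s i.+2
       & nth 0 s i.+2 < nth 0 s i.+1]].

Definition Av1432 (n : nat) : {set 'S_n} := [set p | ~~ contains1432 p].

(* Main.v *)
Require Import Defs.
From mathcomp Require Import all_boot all_fingroup.
From mathcomp Require Import zify.
Set Implicit Arguments. Unset Strict Implicit. Unset Printing Implicit Defensive.

Lemma card_le_ord n (x : 'I_n) : #|[set y : 'I_n | y <= x]| = x.+1.
Proof.
rewrite cardsE cardE /enum_mem size_filter -enumT.
rewrite (@eq_count _ _ (preim val (fun y => y <= x))); last first.
  by move=> y /=.
rewrite -count_map val_enum_ord -size_filter.
have := @filter_iota_leq n 0 x (ltn_ord x).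
rewrite add0n => ->. by rewrite size_iota.
Qed.

Definition pn n (p : 'S_n) (k : nat) := nth 0 (perm_seq p) k.

Lemma pnE n (p : 'S_n) (i : 'I_n) : pn p i = p i.
Proof.
rewrite /pn /perm_seq (nth_map i 0) ?size_enum_ord // nth_ord_enum //.
Qed.

Lemma pn_inj n (p : 'S_n) a b : a < n -> b < n -> pn p a = pn p b -> a = b.
Proof.
move=> Ha Hb.
rewrite -[a]/(nat_of_ord (Ordinal Ha)) -[b]/(nat_of_ord (Ordinal Hb)) !pnE.
by move/val_inj/perm_inj => ->.
Qed.

Definition Cn n (p : 'S_n) (x : nat) :=
  #|[set j : 'I_n | (x < j) && (pn p j < pn p x)]|.

Lemma CnE n (p : 'S_n) (i : 'I_n) :
  Cn p i = #|[set j : 'I_n | (i < j) && (p j < p i)]|.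
Proof. by apply: eq_card => j; rewrite !inE !pnE. Qed.

Lemma Cn_bound n (p : 'S_n) (i : 'I_n) : Cn p i <= n - i.+1.
Proof.
rewrite /Cn.
apply: (@leq_trans #|~: [set y : 'I_n | y <= i]|).
  apply: subset_leq_card; apply/subsetP => j; rewrite !inE -ltnNge.
  by case/andP.
have H := cardsC [set y : 'I_n | y <= i].
rewrite card_le_ord card_ord in H. lia.
Qed.

Lemma code_le n (p : 'S_n) (k : 'I_n) : Cn p (rev_ord k) <= k.
Proof.
apply: leq_trans (Cn_bound p (rev_ord k)) _.
rewrite /=. have := ltn_ord k. lia.
Qed.

Definition code n (p : 'S_n) : n.-tuple 'I_n :=
  [tuple Ordinal (leq_ltn_trans (code_le p k) (ltn_ord k)) | k < n].

Lemma tnth_code n (p : 'S_n) k : val (tnth (code p) k) = Cn p (n - k.+1).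
Proof. by rewrite tnth_mktuple. Qed.

Lemma en_eq n (p : 'S_n) k : k < n ->
  nth 0 (map val (code p)) k = Cn p (n - k.+1).
Proof.
move=> Hk. rewrite (nth_map (Ordinal Hk) 0) ?size_tuple //.
by rewrite -[k]/(nat_of_ord (Ordinal Hk)) -tnth_nth tnth_code.
Qed.

Lemma C_values n (p : 'S_n) (i : 'I_n) :
  Cn p i = #|[set v : 'I_n | (v < p i) && (v \notin p @: [set j : 'I_n | j < i])]|.
Proof.
rewrite CnE -(card_imset _ (@perm_inj _ p)). apply: eq_card => v.
have [k ->] : exists k, v = p k by exists ((p^-1)%g v); rewrite permKV.
rewrite !inE !mem_imset; try exact: perm_inj.
rewrite !inE -leqNgt.
case: (ltngtP i k) => Hik.
- by case: (p k < p i); rewrite ?andbF //=; lia.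
- by case: (p k < p i); rewrite ?andbF //=; lia.
- have -> : k = i by apply/val_inj.
  by rewrite ltnn.
Qed.

Lemma V_mono n (T : {set 'I_n}) (x y : 'I_n) : x \notin T -> x < y ->
  #|[set v : 'I_n | (v < x) && (v \notin T)]| <
  #|[set v : 'I_n | (v < y) && (v \notin T)]|.
Proof.
move=> hx hxy; apply: proper_card; apply/properP; split.
  apply/subsetP => v; rewrite !inE => /andP[h1 ->]; rewrite andbT.
  exact: ltn_trans h1 hxy.
by exists x; rewrite !inE ?ltnn ?hxy.
Qed.

Lemma C_inj n (p q : 'S_n) : (forall i : 'I_n, Cn p i = Cn q i) -> p = q.
Proof.
move=> H. apply/permP.
suff: forall m (i : 'I_n), i < m -> p i = q i.
  by move=> S i; apply: (S n).
elim=> [|m IH] i Hi //.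
case: (ltnP i m) => [/IH//|Him].
have Hj : forall j : 'I_n, j < i -> p j = q j.
  move=> j Hj; apply: IH; lia.
have ET : p @: [set j : 'I_n | j < i] = q @: [set j : 'I_n | j < i].
  by apply: eq_in_imset => j; rewrite inE => /Hj.
have HC := H i. rewrite !C_values -ET in HC.
have hp : p i \notin p @: [set j : 'I_n | j < i].
  by rewrite mem_imset ?inE ?ltnn //; exact: perm_inj.
have hq : q i \notin p @: [set j : 'I_n | j < i].
  by rewrite ET mem_imset ?inE ?ltnn //; exact: perm_inj.
apply/val_inj. case: (ltngtP (p i) (q i)) => // Hlt.
- by have := V_mono hp Hlt; rewrite HC ltnn.
- by have := V_mono hq Hlt; rewrite HC ltnn.
Qed.

Lemma code_inj n : injective (@code n).
Proof.
move=> p q E. apply: C_inj => i.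
have := congr1 (fun t => val (tnth t (rev_ord i))) E.
rewrite /= !tnth_code.
have -> : n - (rev_ord i).+1 = i by rewrite /=; have := ltn_ord i; lia.
done.
Qed.

Lemma pattern_equiv n (p : 'S_n) (i : nat) : i.+2 < n ->
  ([exists j : 'I_n, [&& i.+2 < j, pn p i < pn p j & pn p j < pn p i.+2]]
    && (pn p i.+2 < pn p i.+1))
  = (Cn p i < Cn p i.+2) && (Cn p i.+2 < Cn p i.+1).
Proof.
move=> Hn.
apply/idP/idP.
- case/andP=> /existsP[j /and3P[hj h1 h2]] hcb.
  apply/andP; split; apply: proper_card; apply/properP; split.
  + apply/subsetP => k; rewrite !inE => /andP[hk hka].
    have hk1 : k != i.+1 :> nat.
      by apply/eqP => E; move: hka; rewrite E; lia.
    have hk2 : k != i.+2 :> nat.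
      by apply/eqP => E; move: hka; rewrite E; lia.
    apply/andP; split; lia.
  + exists j; rewrite !inE; [apply/andP; split; lia | ].
    apply/negP => /andP[_]; lia.
  + apply/subsetP => k; rewrite !inE => /andP[hk hka].
    apply/andP; split; lia.
  + have Hn2 : i.+2 < n by [].
    exists (Ordinal Hn2); rewrite !inE /=; [apply/andP; split; lia | ].
    by rewrite ltnn.
- case/andP=> hC1 hC2.
  have hcb : pn p i.+2 < pn p i.+1.
    rewrite ltnNge; apply/negP => hbc.
    move: hC2; rewrite ltnNge => /negP; apply; apply: subset_leq_card.
    apply/subsetP => k; rewrite !inE => /andP[hk hkb].
    have hk2 : k != i.+2 :> nat.
      by apply/eqP => E; move: hkb hbc; rewrite E; lia.
    apply/andP; split; lia.
  rewrite hcb andbT.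
  apply: contraT; rewrite negb_exists => /forallP hno.
  suff : Cn p i.+2 <= Cn p i by move: hC1; lia.
  apply: subset_leq_card.
  apply/subsetP => k; rewrite !inE => /andP[hk hkc].
  have := hno k; rewrite hk hkc /= andbT -leqNgt => hka.
  have hne : pn p k != pn p i.
    apply/negP => /eqP /pn_inj E.
    have := E (ltn_ord k) (ltn_trans (ltnSn _) (ltn_trans (ltnSn _) Hn)).
    lia.
  apply/andP; split; [lia | ].
  by rewrite ltn_neqAle hne hka.
Qed.

Lemma enC n (p : 'S_n) k x : k < n -> n - k.+1 = x ->
  nth 0 (map val (code p)) k = Cn p x.
Proof. by move=> Hk <-; rewrite en_eq. Qed.

Lemma av_equiv n (p : 'S_n) : contains1432 p = ~~ avoids120 (code p).
Proof.
rewrite /contains1432 /avoids120 /= negb_forall.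
apply/existsP/existsP.
- case=> i /existsP[j /and4P[h1 h2 h3 h4]].
  have Hi : i.+2 < n by have := ltn_ord j; lia.
  have HC : (Cn p i < Cn p i.+2) && (Cn p i.+2 < Cn p i.+1).
    rewrite -pattern_equiv // -/(pn p i.+2) -/(pn p i.+1) h4 andbT.
    by apply/existsP; exists j; apply/and3P.
  have Hm : n - i.+3 < n by lia.
  exists (Ordinal Hm) => /=.
  rewrite (@enC _ _ (n - i.+3).+2 i); [|lia|lia].
  rewrite (@enC _ _ (n - i.+3) i.+2); [|lia|lia].
  rewrite (@enC _ _ (n - i.+3).+1 i.+1); [|lia|lia].
  move: HC; case/andP => a b. apply/negP => /implyP H.
  have : (n - i.+3).+2 < n by lia.
  by move/H; rewrite a b.
- case=> m; rewrite negb_imply => /andP[hm].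
  rewrite (@enC _ _ m.+2 (n - m.+3)); [|lia|lia].
  rewrite (@enC _ _ m (n - m.+3).+2); [|lia|lia].
  rewrite (@enC _ _ m.+1 (n - m.+3).+1); [|lia|lia].
  rewrite negbK => HC.
  have Hi : (n - m.+3).+2 < n by lia.
  have := pattern_equiv p Hi. rewrite HC => /andP[/existsP[j hj] h4].
  have Hi0 : n - m.+3 < n by lia.
  exists (Ordinal Hi0); apply/existsP; exists j => /=.
  case/and3P: hj => a b c. apply/and4P; split => //.
Qed.

Definition InvS n : {set n.-tuple 'I_n} := [set e | is_invseq e].

Definition Fam n (x : 'I_n) : pred 'I_n := fun y => y <= x.

Definition tup n (f : {dffun forall x : 'I_n, 'I_n}) : n.-tuple 'I_n :=
  [tuple f i | i < n].

Lemma prod_fact n : \prod_(i < n) i.+1 = n`!.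
Proof. by elim: n => [|n IH]; rewrite ?big_ord0 // big_ord_recr /= IH factS mulnC. Qed.

Lemma card_InvS n : #|InvS n| = n`!.
Proof.
have -> : InvS n = [set tup f | f in family (@Fam n)].
  apply/setP => e; rewrite inE; apply/idP/idP.
  - move=> /forallP He.
    apply/imsetP; exists [ffun i => tnth e i].
      by apply/familyP => i; rewrite ffunE; apply: He.
    by apply: eq_from_tnth => i; rewrite tnth_mktuple ffunE.
  - case/imsetP => f /familyP Hf ->.
    by apply/forallP => i; rewrite tnth_mktuple; apply: Hf.
rewrite card_imset; last first.
  move=> f g E; apply/ffunP => i.
  by have := congr1 (fun t => tnth t i) E; rewrite /= !tnth_mktuple.
rewrite card_family foldrE big_map big_enum /= -prod_fact.
apply: eq_bigr => i _.
rewrite -card_le_ord; apply: eq_card => y; by rewrite inE.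
Qed.

Lemma code_image n : [set code p | p in [set: 'S_n]] = InvS n.
Proof.
apply/eqP; rewrite eqEcard; apply/andP; split.
  apply/subsetP => e /imsetP[p _ ->]; rewrite inE.
  by apply/forallP => k; rewrite tnth_code; apply: code_le.
by rewrite card_imset ?card_InvS ?cardsT ?card_Sn //; exact: code_inj.
Qed.

Lemma Inv120_image n : Inv120 n = [set code p | p in Av1432 n].
Proof.
apply/setP => e; apply/idP/idP.
- rewrite inE => /andP[Hi Ha].
  have : e \in InvS n by rewrite inE.
  rewrite -code_image => /imsetP[p _ E].
  apply/imsetP; exists p => //.
  by rewrite inE av_equiv negbK -E.
- case/imsetP => p; rewrite inE av_equiv negbK => Ha ->.
  rewrite inE Ha andbT.
  have : code p \in InvS n by rewrite -code_image; apply/imsetP; exists p.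
  by rewrite inE.
Qed.

Lemma fin_bij (T U : finType) : #|T| = #|U| -> exists f : T -> U, bijective f.
Proof.
move=> H.
exists (fun x => enum_val (cast_ord H (enum_rank x))).
exists (fun y => enum_val (cast_ord (esym H) (enum_rank y))).
- by move=> x; rewrite enum_valK cast_ordK enum_rankK.
- by move=> y; rewrite enum_valK cast_ordKV enum_rankK.
Qed.

Theorem mainTheorem20 (n : nat) :
  (exists f : {e : n.-tuple 'I_n | e \in Inv120 n} ->
              {p : 'S_n | p \in Av1432 n}, bijective f)
  /\ #|Inv120 n| = #|Av1432 n|.
Proof.
have Hc : #|Inv120 n| = #|Av1432 n|.
  by rewrite Inv120_image card_imset //; exact: code_inj.
split => //.
apply: fin_bij. by rewrite !card_sig.
Qed.
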